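(* Let $\mathcal{M}$ be the collection of all sets of reductions $\mathcal{F}$ with $\mathsf{Lip}\subseteq\mathcal{F}\subseteq\mathsf{Bor}$ such that $\Delta_{\mathcal{F}}$ is closed under finite intersections. The map $\mathcal{F}\mapsto\mathcal{F}^*$ sends every $\mathcal{F}\in\mathcal{M}$ to a Borel-amenable set of reductions, is a surjection of $\mathcal{M}$ onto $\mathsf{BAR}$, and: (i) $\mathcal{F}^*=\mathcal{F}$ for every $\mathcal{F}\in\mathsf{BAR}$; (ii) for every $\mathcal{F}\in\mathcal{M}$, $\mathcal{F}^*$ is the minimal (with respect to inclusion) Borel-amenable set of reductions containing $\mathcal{F}$.
   Context: Base theory $\mathsf{ZF}+\mathsf{AC}_\omega(\mathbb{R})$. $\mathbb{R}={}^\omega\omega$ with metric $d(x,y)=2^{-n}$, $n$ least with $x(n)\ne y(n)$; $\mathbf{N}_s=\{x:s\subseteq x\}$. $\mathsf{Lip}(C)$: functions with $d(f(x),f(y))\le Cd(x,y)$; $\mathsf{Lip}=\bigcup_{k\in\mathbb{Z}}\mathsf{Lip}(2^k)$; $\mathsf{L}=\mathsf{Lip}(1)$; $\mathsf{Bor}$ is the set of Borel functions $\mathbb{R}\to\mathbb{R}$. A set of reductions is a set $\mathcal{F}$ of functions $\mathbb{R}\to\mathbb{R}$ closed under composition, containing $\mathsf{L}$, with a surjection $\mathbb{R}\twoheadrightarrow\mathcal{F}$. $A\le_{\mathcal{F}}B$ iff $A=f^{-1}(B)$ for some $f\in\mathcal{F}$; $\Delta_{\mathcal{F}}=\{A:A\le_{\mathcal{F}}\mathbf{N}_{\langle0\rangle}\}$;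 a $\Delta_{\mathcal{F}}$-partition of $\mathbb{R}$ is a sequence $\langle D_n:n\in\omega\rangle$ of pairwise disjoint sets in $\Delta_{\mathcal{F}}$ with union $\mathbb{R}$. A set of reductions $\mathcal{F}\subseteq\mathsf{Bor}$ is Borel-amenable if $\mathsf{Lip}\subseteq\mathcal{F}$ and $\bigcup_n(f_n\restriction D_n)\in\mathcal{F}$ for every $\Delta_{\mathcal{F}}$-partition $\langle D_n\rangle$ and every $\{f_n\}\subseteq\mathcal{F}$; $\mathsf{BAR}$ is the collection of Borel-amenable sets of reductions. For $\mathcal{F}\in\mathcal{M}$, $\mathcal{F}^*=\{\bigcup_{n\in\omega}(f_n\restriction D_n): f_n\in\mathcal{F}\text{ for all }n,\ \langle D_n\rangle\text{ a }\Delta_{\mathcal{F}}\text{-partition of }\mathbb{R}\}$. *)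

(* Defs.v *)
From Stdlib Require Import Reals Lra ZArith List ClassicalEpsilon ConstructiveEpsilon Arith.
Open Scope R_scope.

Definition Baire := nat -> nat.

Definition first_diff (x y : Baire) (H : exists n, x n <> y n) : nat :=
  proj1_sig (epsilon_smallest (fun n => x n <> y n)
               (fun n => match Nat.eq_dec (x n) (y n) with
                         | left e => right (fun h => h e)
                         | right ne => left ne end) H).

Definition d (x y : Baire) : R :=
  match excluded_middle_informative (exists n, x n <> y n) with
  | left H => / 2 ^ (first_diff x y H)
  | right _ => 0
  end.

Definition N (s : list nat) : Baire -> Prop :=
  fun x => forall i, (i < length s)%nat -> x i = nth i s 0%nat.

Inductive borel : (Baire -> Prop) -> Prop :=
  | borel_basic : forall s, borel (N s)
  | borel_compl : forall A, borel A -> borel (fun x => ~ A x)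
  | borel_cunion : forall A : nat -> Baire -> Prop,
      (forall n, borel (A n)) -> borel (fun x => exists n, A n x).

Definition fset := (Baire -> Baire) -> Prop.
Definition fsubset (F G : fset) : Prop := forall f, F f -> G f.
Definition fseteq (F G : fset) : Prop := forall f, F f <-> G f.

Definition Bor : fset :=
  fun f => forall B, borel B -> borel (fun x => B (f x)).

Definition Lip_C (C : R) : fset :=
  fun f => forall x y, d (f x) (f y) <= C * d x y.

Definition Lip : fset := fun f => exists k : Z, Lip_C (powerRZ 2 k) f.
Definition L : fset := Lip_C 1.

Definition set_of_reductions (F : fset) : Prop :=
  (forall f g, F f -> F g -> F (fun x => f (g x))) /\
  fsubset L F /\
  (exists e : Baire -> (Baire -> Baire),
      (forall x, F (e x)) /\ (forall f, F f -> exists x, e x = f)).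

Definition reducible (F : fset) (A B : Baire -> Prop) : Prop :=
  exists f, F f /\ forall x, A x <-> B (f x).

Definition Delta (F : fset) (A : Baire -> Prop) : Prop :=
  reducible F A (N (0%nat :: nil)).

Definition Delta_partition (F : fset) (D : nat -> Baire -> Prop) : Prop :=
  (forall n, Delta F (D n)) /\
  (forall n m x, n <> m -> D n x -> D m x -> False) /\
  (forall x, exists n, D n x).

Definition is_glue (D : nat -> Baire -> Prop) (f : nat -> Baire -> Baire)
  (g : Baire -> Baire) : Prop :=
  forall n x, D n x -> g x = f n x.

Definition borel_amenable (F : fset) : Prop :=
  set_of_reductions F /\ fsubset F Bor /\ fsubset Lip F /\
  (forall D f g, Delta_partition F D -> (forall n, F (f n)) -> is_glue D f g -> F g).

Definition BAR (F : fset) : Prop := borel_amenable F.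

Definition M (F : fset) : Prop :=
  set_of_reductions F /\ fsubset Lip F /\ fsubset F Bor /\
  (forall A B, Delta F A -> Delta F B -> Delta F (fun x => A x /\ B x)).

Definition Fstar (F : fset) : fset :=
  fun g => exists (D : nat -> Baire -> Prop) (f : nat -> Baire -> Baire),
    Delta_partition F D /\ (forall n, F (f n)) /\ is_glue D f g.

(* Main.v *)
Require Import Defs.
From Stdlib Require Import Reals Lra ClassicalEpsilon ConstructiveEpsilon FunctionalExtensionality PropExtensionality Arith Cantor Classical Lia List.
Import Defs.
Open Scope R_scope.

Lemma pred_ext (A B : Baire -> Prop) : (forall x, A x <-> B x) -> A = B.
Proof. intro H; apply functional_extensionality; intro x; apply propositional_extensionality; auto. Qed.

Lemma first_diff_spec x y H :
  x (first_diff x y H) <> y (first_diff x y H) /\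
  forall k, x k <> y k -> (first_diff x y H <= k)%nat.
Proof. unfold first_diff. destruct epsilon_smallest as [n [Hn Hm]]. simpl. auto. Qed.

Lemma d_equiv u v x y : (forall n, u n = v n <-> x n = y n) -> d u v = d x y.
Proof.
  intro E. unfold d.
  destruct (excluded_middle_informative (exists n, u n <> v n)) as [H1|H1];
  destruct (excluded_middle_informative (exists n, x n <> y n)) as [H2|H2].
  - f_equal; f_equal.
    destruct (first_diff_spec u v H1) as [a1 b1].
    destruct (first_diff_spec x y H2) as [a2 b2].
    apply Nat.le_antisymm.
    + apply b1. rewrite E. exact a2.
    + apply b2. rewrite <- E. exact a1.
  - exfalso. destruct H1 as [n Hn]. apply H2. exists n. rewrite <- E. auto.
  - exfalso. destruct H2 as [n Hn]. apply H1. exists n. rewrite E. auto.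
  - reflexivity.
Qed.

Lemma d_nonneg x y : 0 <= d x y.
Proof.
  unfold d. destruct excluded_middle_informative; [|lra].
  left. apply Rinv_0_lt_compat, pow_lt; lra.
Qed.

Lemma d_refl x : d x x = 0.
Proof.
  unfold d. destruct excluded_middle_informative as [[n H]|]; [exfalso; auto|auto].
Qed.

Lemma const_L c : L (fun _ => c).
Proof. intros x y. rewrite d_refl. pose proof (d_nonneg x y). lra. Qed.

Lemma id_L : L (fun x => x).
Proof. intros x y. lra. Qed.

Definition swap (x : Baire) : Baire :=
  fun n => match n with 0%nat => (match x 0%nat with 0%nat => 1%nat | _ => 0%nat end) | _ => x n end.

Lemma d_mono u v x y : (forall n, x n = y n -> u n = v n) -> d u v <= d x y.
Proof.
  intro E. unfold d.
  destruct (excluded_middle_informative (exists n, u n <> v n)) as [H1|H1];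
  destruct (excluded_middle_informative (exists n, x n <> y n)) as [H2|H2].
  - destruct (first_diff_spec u v H1) as [a1 b1].
    destruct (first_diff_spec x y H2) as [a2 b2].
    assert (Hle : (first_diff x y H2 <= first_diff u v H1)%nat).
    { apply b2. intro Hc. apply a1. apply E. exact Hc. }
    apply Rinv_le_contravar. apply pow_lt; lra. apply Rle_pow; lra || auto.
  - exfalso. destruct H1 as [n Hn]. apply H2. exists n. intro Hc. apply Hn, E, Hc.
  - left. apply Rinv_0_lt_compat, pow_lt; lra.
  - lra.
Qed.

Lemma swap_L : L swap.
Proof.
  intros x y. rewrite Rmult_1_l. apply d_mono.
  intros [|n] H; simpl; [rewrite H|]; auto.
Qed.

Lemma N0_iff x : N (cons 0%nat nil) x <-> x 0%nat = 0%nat.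
Proof.
  split; intro H.
  - apply (H 0%nat). simpl; lia.
  - intros i Hi. simpl in Hi. assert (i = 0%nat) by lia. subst. exact H.
Qed.

Definition N0 := N (0%nat :: nil).

Section SR.
Variable F : fset.
Hypothesis SR : set_of_reductions F.

Lemma SR_comp f g : F f -> F g -> F (fun x => f (g x)).
Proof. apply (proj1 SR). Qed.
Lemma SR_const c : F (fun _ => c).
Proof. apply (proj1 (proj2 SR)), const_L. Qed.
Lemma SR_id : F (fun x => x).
Proof. apply (proj1 (proj2 SR)), id_L. Qed.
Lemma SR_swap : F swap.
Proof. apply (proj1 (proj2 SR)), swap_L. Qed.

Lemma Delta_pre A h : Delta F A -> F h -> Delta F (fun x => A (h x)).
Proof.
  intros [a [Fa Ha]] Fh. exists (fun x => a (h x)). split.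
  apply SR_comp; auto. intro x; apply Ha.
Qed.

Lemma Delta_compl A : Delta F A -> Delta F (fun x => ~ A x).
Proof.
  intros [a [Fa Ha]]. exists (fun x => swap (a x)). split.
  apply SR_comp; auto using SR_swap.
  intro x. rewrite Ha, !N0_iff. unfold swap. destruct (a x 0%nat); split; intro H; auto; try discriminate; congruence.
Qed.

Lemma Delta_empty : Delta F (fun _ => False).
Proof.
  exists (fun _ => fun _ => 1%nat). split. apply SR_const.
  intro x. rewrite N0_iff. split; [tauto| discriminate].
Qed.

Lemma Delta_full : Delta F (fun _ => True).
Proof.
  exists (fun _ => fun _ => 0%nat). split. apply SR_const.
  intro x. rewrite N0_iff. tauto.
Qed.

Lemma F_sub_Fstar : fsubset F (Fstar F).
Proof.
  intros f Ff. exists (fun n _ => match n with 0%nat => True | _ => False end).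
  exists (fun _ => f). split; [|split].
  - split; [|split].
    + intros [|n]; [apply Delta_full|apply Delta_empty].
    + intros [|n] [|m] x H; simpl; tauto.
    + intro x. exists 0%nat. exact I.
  - auto.
  - intros n x _. reflexivity.
Qed.
End SR.

Lemma Delta_mono F G A : fsubset F G -> Delta F A -> Delta G A.
Proof. intros S [a [Fa Ha]]. exists a. auto. Qed.

Definition gl (D : nat -> Baire -> Prop) (f : nat -> Baire -> Baire)
  (H : forall x, exists n, D n x) : Baire -> Baire :=
  fun x => f (proj1_sig (ClassicalEpsilon.constructive_indefinite_description (fun n => D n x) (H x))) x.

Lemma gl_glue D f H :
  (forall n m x, n <> m -> D n x -> D m x -> False) -> is_glue D f (gl D f H).
Proof.
  intros Hd n x Hn. unfold gl.
  destruct ClassicalEpsilon.constructive_indefinite_description as [m Hm]. simpl.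
  destruct (Nat.eq_dec m n) as [->|ne]; auto.
  exfalso; exact (Hd m n x ne Hm Hn).
Qed.

Definition p1 k := fst (Cantor.of_nat k).
Definition p2 k := snd (Cantor.of_nat k).
Definition pr i j := Cantor.to_nat (i, j).
Lemma p1_pr i j : p1 (pr i j) = i.
Proof. unfold p1, pr. rewrite Cantor.cancel_of_to. reflexivity. Qed.
Lemma p2_pr i j : p2 (pr i j) = j.
Proof. unfold p2, pr. rewrite Cantor.cancel_of_to. reflexivity. Qed.
Lemma pr_inj k k' : p1 k = p1 k' -> p2 k = p2 k' -> k = k'.
Proof.
  unfold p1, p2. intros. rewrite <- (Cantor.cancel_to_of k), <- (Cantor.cancel_to_of k').
  f_equal. destruct (Cantor.of_nat k), (Cantor.of_nat k'); simpl in *; congruence.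
Qed.

Definition Icl (F : fset) := forall A B, Delta F A -> Delta F B -> Delta F (fun x => A x /\ B x).

Lemma refine F P Q : Icl F -> Delta_partition F P -> (forall i, Delta_partition F (Q i)) ->
  Delta_partition F (fun k x => P (p1 k) x /\ Q (p1 k) (p2 k) x).
Proof.
  intros I [P1 [P2 P3]] HQ. split; [|split].
  - intro k. apply I; auto. apply HQ.
  - intros k k' x ne [Hp Hq] [Hp' Hq'].
    destruct (Nat.eq_dec (p1 k) (p1 k')) as [e|e].
    + rewrite <- e in Hq'. destruct (Nat.eq_dec (p2 k) (p2 k')) as [e'|e'].
      * apply ne, pr_inj; auto.
      * exact (proj1 (proj2 (HQ (p1 k))) _ _ x e' Hq Hq').
    + exact (P2 _ _ x e Hp Hp').
  - intro x. destruct (P3 x) as [i Hi]. destruct (proj2 (proj2 (HQ i)) x) as [j Hj].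
    exists (pr i j). rewrite p1_pr, p2_pr. auto.
Qed.

Lemma Fstar_comp F f g : set_of_reductions F -> Icl F ->
  Fstar F f -> Fstar F g -> Fstar F (fun x => f (g x)).
Proof.
  intros SR I [D [fs [HD [Hfs Hf]]]] [E [gs [HE [Hgs Hg]]]].
  exists (fun k x => E (p1 k) x /\ (fun i j x => D j (gs i x)) (p1 k) (p2 k) x).
  exists (fun k x => fs (p2 k) (gs (p1 k) x)).
  split; [|split].
  - apply (refine F E (fun i j x => D j (gs i x))); auto. intro i. destruct HD as [D1 [D2 D3]]. split; [|split].
    + intro j. apply Delta_pre; auto.
    + intros n m x. apply D2.
    + intro x. apply D3.
  - intro k. apply SR_comp; auto.
  - intros k x [H1 H2]. simpl in H2. rewrite (Hg _ _ H1). apply Hf. exact H2.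
Qed.

Lemma Fstar_glue F D fs g : set_of_reductions F -> Icl F ->
  Delta_partition (Fstar F) D -> (forall n, Fstar F (fs n)) -> is_glue D fs g ->
  Fstar F g.
Proof.
  intros SR I [D1 [D2 D3]] Hfs Hg.
  assert (C1 : forall n, exists p : (nat -> Baire -> Prop) * (nat -> Baire -> Baire) * (Baire -> Baire),
     Delta_partition F (fst (fst p)) /\ (forall m, F (snd (fst p) m)) /\
     is_glue (fst (fst p)) (snd (fst p)) (snd p) /\ forall x, D n x <-> N0 (snd p x)).
  { intro n. destruct (D1 n) as [a [[E [h [HE [Hh Ha]]]] Hr]].
    exists (E, h, a). simpl. auto. }
  apply choice in C1. destruct C1 as [pa Hpa].
  assert (C2 : forall n, exists p : (nat -> Baire -> Prop) * (nat -> Baire -> Baire),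
     Delta_partition F (fst p) /\ (forall m, F (snd p m)) /\ is_glue (fst p) (snd p) (fs n)).
  { intro n. destruct (Hfs n) as [Q [u [HQ [Hu Hgl]]]]. exists (Q, u). simpl. auto. }
  apply choice in C2. destruct C2 as [pq Hpq].
  set (E := fun n => fst (fst (pa n))). set (h := fun n => snd (fst (pa n))).
  set (a := fun n => snd (pa n)).
  set (Q := fun n => fst (pq n)). set (u := fun n => snd (pq n)).
  set (P := fun k x => E (p1 k) (p2 k) x /\ N0 (h (p1 k) (p2 k) x)).
  assert (PD : forall k x, P k x -> D (p1 k) x).
  { intros k x [H1 H2]. destruct (Hpa (p1 k)) as [_ [_ [Hgl Hr]]].
    apply Hr. fold (a (p1 k)). unfold a. rewrite (Hgl _ _ H1). exact H2. }
  assert (HP : Delta_partition F P).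
  { split; [|split].
    - intro k. apply I.
      + apply (proj1 (Hpa (p1 k))).
      + exists (h (p1 k) (p2 k)). split; [apply (proj1 (proj2 (Hpa (p1 k))))|]. tauto.
    - intros k k' x ne Hk Hk'.
      destruct (Nat.eq_dec (p1 k) (p1 k')) as [e|e].
      + destruct (Nat.eq_dec (p2 k) (p2 k')) as [e'|e'].
        * apply ne, pr_inj; auto.
        * destruct Hk as [Hk _], Hk' as [Hk' _]. unfold E in Hk, Hk'. rewrite <- e in Hk'.
          exact (proj1 (proj2 (proj1 (Hpa (p1 k)))) _ _ x e' Hk Hk').
      + exact (D2 _ _ x e (PD _ _ Hk) (PD _ _ Hk')).
    - intro x. destruct (D3 x) as [n Hn]. destruct (Hpa n) as [[_ [_ E3]] [_ [Hgl Hr]]].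
      destruct (E3 x) as [m Hm]. exists (pr n m). unfold P. rewrite p1_pr, p2_pr.
      split; [exact Hm|]. rewrite Hr in Hn. rewrite (Hgl _ _ Hm) in Hn. exact Hn. }
  exists (fun k x => P (p1 k) x /\ Q (p1 (p1 k)) (p2 k) x).
  exists (fun k => u (p1 (p1 k)) (p2 k)).
  split; [|split].
  - apply (refine F P (fun i => Q (p1 i))); auto. intro i. apply (Hpq (p1 i)).
  - intro k. apply (proj1 (proj2 (Hpq (p1 (p1 k))))).
  - intros k x [H1 H2]. rewrite (Hg _ _ (PD _ _ H1)).
    apply (proj2 (proj2 (Hpq (p1 (p1 k))))). exact H2.
Qed.

Lemma borel_ext A B : (forall x, A x <-> B x) -> borel A -> borel B.
Proof. intros H HA. rewrite <- (pred_ext A B H). exact HA. Qed.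

Lemma borel_or A B : borel A -> borel B -> borel (fun x => A x \/ B x).
Proof.
  intros HA HB. apply (borel_ext (fun x => exists n, (fun n => match n with 0%nat => A | _ => B end) n x)).
  - intro x. split. intros [[|n] H]; auto. intros [H|H]; [exists 0%nat|exists 1%nat]; auto.
  - apply borel_cunion. intros [|n]; auto.
Qed.

Lemma borel_and A B : borel A -> borel B -> borel (fun x => A x /\ B x).
Proof.
  intros HA HB. apply (borel_ext (fun x => ~ (~ A x \/ ~ B x))).
  - intro x. tauto.
  - apply borel_compl, borel_or; apply borel_compl; auto.
Qed.

Lemma Fstar_Bor F : fsubset F Bor -> fsubset (Fstar F) Bor.
Proof.
  intros HB g [D [fs [[D1 [D2 D3]] [Hfs Hg]]]] B bB.
  apply (borel_ext (fun x => exists n, D n x /\ B (fs n x))).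
  - intro x. split.
    + intros [n [Hn HBn]]. rewrite (Hg _ _ Hn). exact HBn.
    + intro H. destruct (D3 x) as [n Hn]. exists n. rewrite <- (Hg _ _ Hn). auto.
  - apply borel_cunion. intro n. apply borel_and.
    + destruct (D1 n) as [a [Fa Ha]]. apply (borel_ext (fun x => N0 (a x))).
      intro x; rewrite Ha; tauto. apply (HB a Fa). apply borel_basic.
    + apply (HB _ (Hfs n)). exact bB.
Qed.

Definition dec (x : Baire) (i : nat) : Baire := fun j => x (pr i j).

Section Surj.
Variable F : fset.
Variable e : Baire -> (Baire -> Baire).
Hypothesis He : forall x, F (e x).
Hypothesis Hs : forall f, F f -> exists x, e x = f.
Hypothesis SR : set_of_reductions F.

Definition Dset (x : Baire) n y := N0 (e (dec (dec x 0) n) y).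
Definition fset_ (x : Baire) n := e (dec (dec x 1) n).
Definition valid x := (forall n m y, n <> m -> Dset x n y -> Dset x m y -> False) /\
   (forall y, exists n, Dset x n y).
Definition estar (x : Baire) : Baire -> Baire :=
  match excluded_middle_informative (valid x) with
  | left H => gl (Dset x) (fset_ x) (proj2 H)
  | right _ => fun y => y end.

Lemma estar_in x : Fstar F (estar x).
Proof.
  unfold estar. destruct excluded_middle_informative as [H|H].
  - exists (Dset x), (fset_ x). split; [|split].
    + split; [|exact H]. intro n. exists (e (dec (dec x 0) n)). split; [apply He|]. unfold Dset; tauto.
    + intro n. apply He.
    + apply gl_glue. apply (proj1 H).
  - apply F_sub_Fstar; auto. apply SR_id; auto.
Qed.

Lemma estar_onto g : Fstar F g -> exists x, estar x = g.
Proof.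
  intros [D [fs [HD [Hfs Hg]]]].
  assert (CA : forall n, exists c, forall y, D n y <-> N0 (e c y)).
  { intro n. destruct (proj1 HD n) as [a [Fa Ha]]. destruct (Hs a Fa) as [c Hc].
    exists c. rewrite Hc. exact Ha. }
  assert (CF : forall n, exists c, e c = fs n).
  { intro n. apply Hs, Hfs. }
  apply choice in CA. apply choice in CF. destruct CA as [cA HA]. destruct CF as [cF HF].
  set (x := fun k => let i := p1 k in let r := p2 k in
             match i with 0%nat => cA (p1 r) (p2 r) | _ => cF (p1 r) (p2 r) end).
  assert (X0 : forall n, dec (dec x 0) n = cA n).
  { intro n. apply functional_extensionality. intro j. unfold dec, x. repeat (rewrite p1_pr || rewrite p2_pr). reflexivity. }
  assert (X1 : forall n, dec (dec x 1) n = cF n).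
  { intro n. apply functional_extensionality. intro j. unfold dec, x. repeat (rewrite p1_pr || rewrite p2_pr). reflexivity. }
  assert (DE : forall n y, Dset x n y <-> D n y).
  { intros n y. unfold Dset. rewrite X0, HA. tauto. }
  exists x. unfold estar. destruct excluded_middle_informative as [H|H].
  - apply functional_extensionality. intro y. unfold gl.
    destruct ClassicalEpsilon.constructive_indefinite_description as [m Hm]. simpl.
    unfold fset_. rewrite X1, HF. symmetry. apply Hg. apply DE. exact Hm.
  - exfalso. apply H. destruct HD as [_ [D2 D3]]. split.
    + intros n m y ne H1 H2. rewrite DE in H1, H2. eauto.
    + intro y. destruct (D3 y) as [n Hn]. exists n. apply DE. exact Hn.
Qed.
End Surj.

Lemma M_Fstar_BAR F : M F -> BAR (Fstar F).
Proof.
  intros [SR [HL [HB I]]].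
  assert (SR' : set_of_reductions (Fstar F)).
  { split; [|split].
    - intros f g Hf Hg. apply Fstar_comp; auto.
    - intros f Hf. apply F_sub_Fstar; auto. apply (proj1 (proj2 SR)). auto.
    - pose proof SR as [_ [_ [e [He Hs]]]].
      exists (estar e). split.
      + intro x. apply (estar_in F); auto.
      + intros f Hf. apply (estar_onto F); auto. }
  split; [exact SR'|split; [|split]].
  - apply Fstar_Bor; auto.
  - intros f Hf. apply F_sub_Fstar; auto.
  - intros D f g HD Hf Hg. apply (Fstar_glue F D f g); auto.
Qed.

Lemma BAR_Icl G : BAR G -> Icl G.
Proof.
  intros [SR [HB [HL Hgl]]] A B [a [Ga Ha]] [b [Gb Hb]].
  set (c1 := fun _ : nat => 1%nat).
  set (h := fun x => if excluded_middle_informative (A x) then b x else c1).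
  set (D := fun n x => match n with 0%nat => A x | 1%nat => ~ A x | _ => False end).
  set (f := fun n => match n with 0%nat => b | _ => fun _ : Baire => c1 end).
  assert (Gh : G h).
  { apply (Hgl D f h).
    - split; [|split].
      + intros [|[|n]]; simpl.
        * exists a; auto.
        * apply Delta_compl; auto. exists a; auto.
        * apply Delta_empty; auto.
      + intros [|[|n]] [|[|m]] x ne; simpl; tauto.
      + intro x. destruct (classic (A x)); [exists 0%nat|exists 1%nat]; auto.
    - intros [|n]; simpl; auto. apply SR_const; auto.
    - intros [|[|n]] x Hx; simpl in Hx; unfold h; destruct excluded_middle_informative; tauto. }
  exists h. split; auto. intro x. unfold h. destruct excluded_middle_informative as [H|H].
  - rewrite <- Hb. tauto.
  - rewrite N0_iff. unfold c1. split; [tauto|discriminate].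
Qed.

Lemma BAR_M G : BAR G -> M G.
Proof.
  intro H. pose proof (BAR_Icl G H) as I. destruct H as [SR [HB [HL Hgl]]].
  split; [|split; [|split]]; auto.
Qed.

Lemma BAR_Fstar_eq F : BAR F -> fseteq (Fstar F) F.
Proof.
  intros H f. destruct H as [SR [HB [HL Hgl]]]. split.
  - intros [D [fs [HD [Hfs Hg]]]]. eapply Hgl; eauto.
  - apply F_sub_Fstar; auto.
Qed.

Lemma Fstar_min F G : BAR G -> fsubset F G -> fsubset (Fstar F) G.
Proof.
  intros [SR [HB [HL Hgl]]] S g [D [fs [[D1 [D2 D3]] [Hfs Hg]]]].
  apply (Hgl D fs g); auto.
  split; [|split]; auto. intro n. apply (Delta_mono F); auto.
Qed.

Theorem theorem6p1 :
  (forall F, M F -> BAR (Fstar F)) /\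
  (forall G, BAR G -> exists F, M F /\ fseteq (Fstar F) G) /\
  (forall F, BAR F -> fseteq (Fstar F) F) /\
  (forall F, M F ->
     fsubset F (Fstar F) /\
     (forall G, BAR G -> fsubset F G -> fsubset (Fstar F) G)).
Proof.
  split; [exact M_Fstar_BAR|split; [|split]].
  - intros G H. exists G. split. apply BAR_M; auto. apply BAR_Fstar_eq; auto.
  - exact BAR_Fstar_eq.
  - intros F HM. split.
    + apply F_sub_Fstar. apply HM.
    + intros G HG S. apply Fstar_min; auto.
Qed.
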